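(* Let $\mathbb{F}$ be any field. For all $n, d \in \mathbb{N}$, there is a polynomial map $P:\mathbb{F}^{\lfloor n^{d}/100\rfloor} \to \mathbb{F}^{n^d}$, each coordinate of which is a polynomial of degree at most $d$, such that every $d$-dimensional tensor $\tau:[n]^{d} \to \mathbb{F}$ of rank at most $n^{d-1}/(100d)$ lies in its image.
   Context: The rank of a tensor $\tau:[n]^d\to\mathbb{F}$ is the least $r$ such that $\tau=\sum_{i=1}^r v_{i,1}\otimes\cdots\otimes v_{i,d}$ with all $v_{i,j}\in\mathbb{F}^n$. Tensors are identified with vectors in $\mathbb{F}^{n^d}$. *)

(* Defs.v *)
From HB Require Import structures.
From mathcomp Require Import all_boot all_order all_algebra.
From mathcomp Require Import mpoly.
Set Implicit Arguments. Unset Strict Implicit. Unset Printing Implicit Defensive.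
Import Order.TTheory GRing.Theory Num.Theory.
Local Open Scope ring_scope.

Definition tensor (F : fieldType) (n d : nat) := {ffun 'I_d -> 'I_n} -> F.

Definition has_rank_decomp (F : fieldType) (n d r : nat) (tau : tensor F n d) :=
  exists v : 'I_r -> 'I_d -> 'I_n -> F,
    forall idx : {ffun 'I_d -> 'I_n},
      tau idx = \sum_(i < r) \prod_(j < d) v i j (idx j).

(* rank(tau) <= R  (R rational): the least r with a decomposition is <= R,
   i.e. some decomposition with r <= R terms exists. *)
Definition tensor_rank_le (F : fieldType) (n d : nat) (tau : tensor F n d) (R : rat) :=
  exists r : nat, (r%:R <= R)%R /\ has_rank_decomp r tau.

(* Main.v *)
Require Import Defs.
From HB Require Import structures.
From mathcomp Require Import all_boot all_order all_algebra.
From mathcomp Require Import mpoly.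
From mathcomp Require Import zify.
Import Order.TTheory GRing.Theory Num.Theory.
Local Open Scope ring_scope.

Lemma prodX_msize (F : fieldType) (m d : nat) (g : 'I_d -> 'I_m) :
  (msize (\prod_(j < d) ('X_(g j) : {mpoly F[m]})) <= d.+1)%N.
Proof.
have -> : \prod_(j < d) ('X_(g j) : {mpoly F[m]}) = 'X_[\sum_(j < d) U_(g j)].
  by elim/big_rec2: _ => [|j mm p _ ->]; rewrite ?mpolyX0 ?mpolyXD.
by rewrite msizeX mdeg_sum (eq_bigr (fun _ => 1%N)) ?sum1_card ?card_ord // => j _; rewrite mdeg1.
Qed.

Theorem lemma4p3 (F : fieldType) (n d : nat) :
  exists P : {ffun 'I_d -> 'I_n} -> {mpoly F[(n ^ d %/ 100)%N]},
    (forall idx, (msize (P idx) <= d.+1)%N) /\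
    forall tau : tensor F n d,
      tensor_rank_le tau ((n ^ d.-1)%:R / (100 * d)%:R : rat) ->
      exists x : 'I_(n ^ d %/ 100) -> F, forall idx, tau idx = (P idx).@[x].
Proof.
case: d => [|d].
  exists (fun _ => 0); split => [idx|tau [r [Hr [v Hv]]]]; first by rewrite msize0.
  exists (fun _ => 0) => idx; rewrite Hv meval0.
  move: Hr; rewrite muln0 invr0 mulr0 -(mulr0n 1) ler_nat leqn0 => /eqP Hr0; subst r.
  by rewrite big_ord0.
set m := (n ^ d.+1 %/ 100)%N.
set R0 := (n ^ d %/ (100 * d.+1))%N.
have Hle : (#|{: 'I_R0 * 'I_d.+1 * 'I_n}| <= m)%N.
  rewrite !card_prod !card_ord /m leq_divRL //.
  have := leq_trunc_div (n ^ d) (100 * d.+1); rewrite -/R0 => H.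
  rewrite expnS.
  have -> : (R0 * d.+1 * n * 100 = n * (R0 * (100 * d.+1)))%N by lia.
  by rewrite leq_mul2l H orbT.
pose f (t : 'I_R0 * 'I_d.+1 * 'I_n) : 'I_m := widen_ord Hle (enum_rank t).
have finj : injective f.
  by move=> a b /(congr1 val) /= /val_inj /enum_rank_inj.
exists (fun idx => \sum_(i < R0) \prod_(j < d.+1) 'X_(f (i, j, idx j))).
split.
  move=> idx; apply: leq_trans (msize_sum _ _ _) _.
  by apply/bigmax_leqP => i _; apply: prodX_msize.
move=> tau [r [Hr [v Hv]]].
have HrR0 : (r <= R0)%N.
  rewrite /R0 leq_divRL // -(ler_nat rat) natrM.
  by rewrite -ler_pdivlMr // ltr0n.
pose vn (i : nat) (j : 'I_d.+1) (k : 'I_n) : F :=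
  if insub i is Some i' then v i' j k else 0.
pose x (k : 'I_m) : F :=
  if [pick t | f t == k] is Some t then vn t.1.1 t.1.2 t.2 else 0.
have xf t : x (f t) = vn t.1.1 t.1.2 t.2.
  rewrite /x; case: pickP => [t' /eqP /finj -> //|/(_ t)]; by rewrite eqxx.
exists x => idx.
rewrite Hv rmorph_sum /=.
under [RHS]eq_bigr => i _ do rewrite rmorph_prod /=.
under [RHS]eq_bigr => i _ do under eq_bigr => j _ do rewrite mevalXU xf /=.
have -> : \sum_(i < r) \prod_(j < d.+1) v i j (idx j) =
          \sum_(i < r) \prod_(j < d.+1) vn i j (idx j).
  apply: eq_bigr => i _; apply: eq_bigr => j _.
  by rewrite /vn insubT // => ?; congr v; apply: val_inj.
rewrite (big_ord_widen _ (fun i => \prod_(j < d.+1) vn i j (idx j)) HrR0).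
rewrite big_mkcond /=; apply: eq_bigr => i _.
case: ifP => // Hir.
by rewrite big_ord_recl /vn insubF ?Hir // mul0r.
Qed.
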